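(* Let $G$ be a group and let $A$ be a finite set. Then every subshift $X \subset A^G$ with bounded propagation is strongly irreducible and of finite type.
   Context: $A^G=\{x\colon G\to A\}$ carries the prodiscrete topology and the $G$-shift action $(gx)(h)=x(g^{-1}h)$; a subshift is a closed $G$-invariant subset. For $X\subset A^G$ and $\Omega\subset G$ finite, $X|_\Omega=\{x|_\Omega : x\in X\}\subset A^\Omega$. For a finite $\Delta\subset G$, $X$ has $\Delta$-propagation if: whenever $\Omega\subset G$ is finite and $p\in A^\Omega$ satisfies $p|_{\Omega\cap g\Delta}\in X|_{\Omega\cap g\Delta}$ for all $g\in G$, then $p\in X|_\Omega$. $X$ has bounded propagation if it has $\Delta$-propagation for some finite $\Delta\subset G$. $X$ is of finite type if there are finite $\Omega\subset G$ and $\mathcal P\subset A^\Omega$ with $X=\{x\in A^G:(gx)|_\Omega\in\mathcal P\ \forall g\in G\}$. $X$ is strongly irreducible if there is finite $\Delta\subset G$ such that for all finite $\Omega_1,\Omega_2\subset G$ with $\Omega_1\Delta^{-1}\cap\Omega_2=\varnothing$ and all $x_1,x_2\in X$ there is $x\in X$ with $x|_{\Omega_1}=x_1|_{\Omega_1}$, $x|_{\Omega_2}=x_2|_{\Omega_2}$. *)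

(* Defs.v *)
From Stdlib Require Import List.
Import ListNotations.

Record Group := {
  carrier :> Type;
  gmul : carrier -> carrier -> carrier;
  ginv : carrier -> carrier;
  gone : carrier;
  gmulA : forall x y z, gmul x (gmul y z) = gmul (gmul x y) z;
  gmul1 : forall x, gmul gone x = x;
  gmulV : forall x, gmul (ginv x) x = gone
}.

Definition finite_type (A : Type) : Prop := exists l : list A, forall a, In a l.

Section Shifts.
Variables (G : Group) (A : Type).

(* Configurations x : A^G; finite subsets of G are represented by lists.
   A pattern p in A^Omega is represented by any p : G -> A (only its values on
   Omega matter). *)
Definition agree_on (P : G -> Prop) (x y : G -> A) : Prop :=
  forall h, P h -> x h = y h.

Definition in_list (L : list G) : G -> Prop := fun h => In h L.

Definition ltrans (g : G) (D : list G) : G -> Prop :=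
  fun h => exists d, In d D /\ h = gmul G g d.

Definition shift (g : G) (x : G -> A) : G -> A := fun h => x (gmul G (ginv G g) h).

Definition in_restr (X : (G -> A) -> Prop) (S : G -> Prop) (p : G -> A) : Prop :=
  exists x, X x /\ agree_on S x p.

(* Closed in the prodiscrete topology: basic open sets are cylinders
   {y | y agrees with x on Omega}, Omega finite. *)
Definition prodiscrete_closed (X : (G -> A) -> Prop) : Prop :=
  forall x, (forall Om : list G, exists y, X y /\ agree_on (in_list Om) y x) -> X x.

Definition shift_invariant (X : (G -> A) -> Prop) : Prop :=
  forall g x, X x -> X (shift g x).

Definition subshift (X : (G -> A) -> Prop) : Prop :=
  prodiscrete_closed X /\ shift_invariant X.

Definition has_propagation (X : (G -> A) -> Prop) (D : list G) : Prop :=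
  forall (Om : list G) (p : G -> A),
    (forall g, in_restr X (fun h => In h Om /\ ltrans g D h) p) ->
    in_restr X (in_list Om) p.

Definition bounded_propagation (X : (G -> A) -> Prop) : Prop :=
  exists D : list G, has_propagation X D.

(* Finite type: a finite Omega and a set P of Omega-patterns (patterns are
   represented by functions G -> A, taken modulo agreement on Omega). *)
Definition finite_type_shift (X : (G -> A) -> Prop) : Prop :=
  exists (Om : list G) (P : (G -> A) -> Prop),
    forall x, X x <-> (forall g, exists q, P q /\ agree_on (in_list Om) (shift g x) q).

Definition strongly_irreducible (X : (G -> A) -> Prop) : Prop :=
  exists D : list G,
    forall (Om1 Om2 : list G),
      (forall w1 d w2, In w1 Om1 -> In d D -> In w2 Om2 -> gmul G w1 (ginv G d) <> w2) ->
      forall x1 x2, X x1 -> X x2 ->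
        exists x, X x /\ agree_on (in_list Om1) x x1 /\ agree_on (in_list Om2) x x2.

End Shifts.
Arguments subshift {G A} X.
Arguments bounded_propagation {G A} X.
Arguments strongly_irreducible {G A} X.
Arguments finite_type_shift {G A} X.

(* Main.v *)
Require Import Defs.
From Stdlib Require Import List.
From Stdlib Require Import Classical ClassicalEpsilon.

Section GL.
Variable G : Group.
Lemma gmulVr (x : G) : gmul G x (ginv G x) = gone G.
Proof.
  set (y := gmul G x (ginv G x)).
  assert (Hyy : gmul G y y = y).
  { unfold y. rewrite <- gmulA. rewrite (gmulA G (ginv G x) x).
    rewrite gmulV, gmul1. reflexivity. }
  rewrite <- (gmulV G y). rewrite <- Hyy at 3. rewrite gmulA, gmulV, gmul1.
  reflexivity.
Qed.
Lemma gmul1r (x : G) : gmul G x (gone G) = x.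
Proof. rewrite <- (gmulV G x), gmulA, gmulVr, gmul1. reflexivity. Qed.
Lemma ginvK (x : G) : ginv G (ginv G x) = x.
Proof.
  rewrite <- (gmul1r (ginv G (ginv G x))). rewrite <- (gmulV G x).
  rewrite gmulA, gmulV, gmul1. reflexivity.
Qed.
Lemma gcancel (g d : G) : gmul G (ginv G g) (gmul G g d) = d.
Proof. rewrite gmulA, gmulV, gmul1. reflexivity. Qed.
End GL.

Theorem proposition2p9 (G : Group) (A : Type) (hA : finite_type A)
  (X : (G -> A) -> Prop) :
  subshift X -> bounded_propagation X ->
  strongly_irreducible X /\ finite_type_shift X.
Proof.
  intros [Hcl Hinv] [D HD]. split.
  - exists (ginv G (gone G) :: map (fun pr => ginv G (gmul G (ginv G (fst pr)) (snd pr))) (list_prod D D)).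
    intros Om1 Om2 Hsep x1 x2 X1 X2.
    assert (Hdisj : forall h, In h Om1 -> In h Om2 -> False).
    { intros h H1 H2. apply (Hsep h (ginv G (gone G)) h H1 (or_introl eq_refl) H2).
      rewrite ginvK, gmul1r. reflexivity. }
    set (p := fun h => if excluded_middle_informative (In h Om1) then x1 h else x2 h).
    destruct (HD (Om1 ++ Om2) p) as [x [Xx Hx]].
    + intro g.
      destruct (classic (exists h, In h Om1 /\ ltrans G g D h)) as [[h1 [Hh1 [d1 [Hd1 E1]]]]|Hno].
      * exists x1. split; [exact X1|]. intros h [Hin [d2 [Hd2 E2]]].
        apply in_app_or in Hin. destruct Hin as [Hin|Hin].
        -- unfold p. destruct (excluded_middle_informative (In h Om1)); [reflexivity|contradiction].
        -- exfalso. apply (Hsep h1 (ginv G (gmul G (ginv G d1) d2)) h Hh1).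
           ++ right. apply in_map_iff. exists (d1, d2). split; [reflexivity|].
              apply in_prod; assumption.
           ++ exact Hin.
           ++ rewrite ginvK, E1, E2, <- gmulA, (gmulA G d1), gmulVr, gmul1. reflexivity.
      * exists x2. split; [exact X2|]. intros h [Hin Hgd].
        unfold p. destruct (excluded_middle_informative (In h Om1)) as [H1|H1].
        -- exfalso. apply Hno. exists h. split; assumption.
        -- reflexivity.
    + exists x. split; [exact Xx|]. split.
      * intros h Hh. rewrite (Hx h (in_or_app _ _ _ (or_introl Hh))). unfold p.
        destruct (excluded_middle_informative (In h Om1)); [reflexivity|contradiction].
      * intros h Hh. rewrite (Hx h (in_or_app _ _ _ (or_intror Hh))). unfold p.
        destruct (excluded_middle_informative (In h Om1)) as [H1|H1].
        -- exfalso. exact (Hdisj h H1 Hh).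
        -- reflexivity.
  - exists D, (fun q => in_restr G A X (in_list G D) q).
    intro x. split.
    + intros Xx g. exists (shift G A g x). split.
      * exists (shift G A g x). split; [apply Hinv; exact Xx|]. intros h _. reflexivity.
      * intros h _. reflexivity.
    + intros H. apply Hcl. intro Om.
      destruct (HD Om x) as [y [Xy Hy]].
      * intro g. destruct (H (ginv G g)) as [q [[y [Xy Hyq]] Hq]].
        exists (shift G A g y). split; [apply Hinv; exact Xy|].
        intros h [_ [d [Hd E]]]. subst h. unfold shift.
        rewrite gcancel. rewrite (Hyq d Hd), <- (Hq d Hd). unfold shift.
        rewrite ginvK. reflexivity.
      * exists y. split; assumption.
Qed.
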